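(* For every $d\ge1$, $\theta^{\rm U}(1,d)=0$.
   Context: For integers $d\ge1$ and $1\le k\le 2d$, let each vertex $x\in\mathbb{Z}^d$, independently of all others, choose a uniformly random subset of exactly $k$ of its $2d$ nearest neighbors (in $\ell_1$-distance). The undirected $k$-neighbor graph ($k$-UnG) on $\mathbb{Z}^d$ has an undirected edge between nearest neighbors $x,y$ whenever $x$ chose $y$ or $y$ chose $x$ (or both). We write $\theta^{\rm U}(k,d)=\mathbb{P}(o\rightsquigarrow\infty\text{ in the $k$-UnG on }\mathbb{Z}^d)$, where $o$ is the origin and $o\rightsquigarrow\infty$ is the event that there is an infinite self-avoiding path of edges of the $k$-UnG starting at $o$ (equivalently, the connected component of $o$ is infinite). *)

(* Defs.v *)
From HB Require Import structures.
From mathcomp Require Import all_boot all_order all_algebra.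
From mathcomp Require Import all_classical all_reals all_analysis.
Set Implicit Arguments. Unset Strict Implicit. Unset Printing Implicit Defensive.
Import Order.TTheory GRing.Theory Num.Theory.
Local Open Scope classical_set_scope.
Local Open Scope ring_scope.

Definition vertex (d : nat) := {ffun 'I_d -> int}.
Definition origin (d : nat) : vertex d := [ffun _ => 0].

(* The 2d nearest-neighbour directions: (i, true) = +e_i, (i, false) = -e_i. *)
Definition dir (d : nat) := ('I_d * bool)%type.

Definition nb (d : nat) (x : vertex d) (s : dir d) : vertex d :=
  [ffun j => x j + (if j == s.1 then (if s.2 then 1 else -1) else 0)].

(* A configuration: each vertex's chosen set of neighbours (as directions). *)
Definition config (d : nat) := vertex d -> {set dir d}.

Definition ung_edge (d : nat) (w : config d) (x y : vertex d) : Prop :=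
  (exists s, s \in w x /\ y = nb x s) \/ (exists t, t \in w y /\ x = nb y t).

Definition reaches_infinity (d : nat) (w : config d) : Prop :=
  exists p : nat -> vertex d,
    p 0%N = origin d /\ injective p /\ forall n, ung_edge w (p n) (p n.+1).

(* The law of the k-neighbour choice: the random sets X v, v in Z^d, are
   independent and each uniform over the k-subsets of the 2d directions. *)
Definition kng_law (d k : nat) (R : realType) (dT : measure_display)
    (T : measurableType dT) (P : probability T R)
    (X : vertex d -> T -> {set dir d}) : Prop :=
  (forall v A, measurable [set t | X v t = A]) /\
  (forall (s : seq (vertex d)) (A : vertex d -> {set dir d}),
     uniq s -> (forall v, v \in s -> #|A v| = k) ->
     P [set t | forall v, v \in s -> X v t = A v] =
       (((('C(2 * d, k))%:R : R)^-1) ^+ size s)%:E).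

Definition inf_event (d : nat) (T : Type) (X : vertex d -> T -> {set dir d})
  : set T := [set t | reaches_infinity (fun v => X v t)].

(* Main.v *)
Require Import Defs.
From HB Require Import structures.
From mathcomp Require Import all_boot all_order all_algebra.
From mathcomp Require Import all_classical all_reals all_analysis.
Set Implicit Arguments. Unset Strict Implicit. Unset Printing Implicit Defensive.
Import Order.TTheory GRing.Theory Num.Theory.
Import numFieldNormedType.Exports.
Local Open Scope classical_set_scope.
Local Open Scope ring_scope.
Section comb.
Variable d : nat.
Definition opp (s : dir d) : dir d := (s.1, ~~ s.2).
Lemma oppK : involutive opp. Proof. by case=> i b; rewrite /opp /= negbK. Qed.
Lemma nbK (x : vertex d) (s : dir d) : nb (nb x s) (opp s) = x.
Proof. apply/ffunP => j; rewrite !ffunE /=; case: eqP => _ //=; last by rewrite !addr0.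
by case: (s.2) => /=; rewrite ?addrK ?subrK. Qed.
Lemma nb_inj (x : vertex d) : injective (nb x).
Proof.
move=> [i b] [i' b'] /ffunP /(_ i); rewrite !ffunE eqxx /= => /addrI.
case: eqP => [<-|//]; last by case: b.
by case: b; case: b'.
Qed.

Fixpoint bcl (x : vertex d) (ds : seq (dir d)) : seq (vertex d * dir d) :=
  if ds is s :: ds' then (nb x s, opp s) :: bcl (nb x s) ds' else [::].
Fixpoint fcl (x : vertex d) (ds : seq (dir d)) : seq (vertex d * dir d) :=
  if ds is s :: ds' then (x, s) :: fcl (nb x s) ds' else [::].
Definition walk x ds := x :: map fst (bcl x ds).
Lemma walk_cons x s ds : walk x (s :: ds) = x :: walk (nb x s) ds.
Proof. by []. Qed.
Lemma size_bcl x ds : size (bcl x ds) = size ds.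
Proof. by elim: ds x => //= s ds IH x; rewrite IH. Qed.
Lemma size_fcl x ds : size (fcl x ds) = size ds.
Proof. by elim: ds x => //= s ds IH x; rewrite IH. Qed.
Lemma fcl_fst x ds : map fst (fcl x ds) = belast x (map fst (bcl x ds)).
Proof. by elim: ds x => //= s ds IH x; rewrite IH. Qed.
Lemma uniq_bcl x ds : uniq (walk x ds) -> uniq (map fst (bcl x ds)).
Proof. by case/andP. Qed.
Lemma uniq_fcl x ds : uniq (walk x ds) -> uniq (map fst (fcl x ds)).
Proof.
rewrite fcl_fst /walk (lastI x) rcons_uniq => /andP[_].
by case: (map _ _).
Qed.

Fixpoint allseq (n : nat) : seq (seq (dir d)) :=
  if n is n'.+1 then [seq s :: ds | s <- (enum {: 'I_d * bool} : seq (dir d)), ds <- allseq n'] else [:: [::]].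
Lemma allseq_size n ds : ds \in allseq n -> size ds = n.
Proof.
elim: n ds => [|n IH] ds /=; first by rewrite inE => /eqP->.
by case/allpairsP => -[s ds'] /= [_ /IH <- ->].
Qed.
Lemma allseq_mem ds : ds \in allseq (size ds).
Proof.
elim: ds => [|s ds IH] /=; first by rewrite inE.
by apply/allpairsP; exists (s, ds); rewrite mem_enum.
Qed.

Lemma walk_iota (p : nat -> vertex d) sd m n :
  (forall i, p i.+1 = nb (p i) (sd i)) ->
  walk (p m) (map sd (iota m n)) = map p (iota m n.+1).
Proof.
move=> Hp; elim: n m => [|n IH] m //=.
by rewrite walk_cons -Hp IH.
Qed.
Lemma fcl_iota (p : nat -> vertex d) sd m n :
  (forall i, p i.+1 = nb (p i) (sd i)) ->
  fcl (p m) (map sd (iota m n)) = map (fun i => (p i, sd i)) (iota m n).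
Proof.
move=> Hp; elim: n m => [|n IH] m //=.
by rewrite -Hp IH.
Qed.
Lemma bcl_iota (p : nat -> vertex d) sd m n :
  (forall i, p i.+1 = nb (p i) (sd i)) ->
  bcl (p m) (map sd (iota m n)) = map (fun i => (p i.+1, opp (sd i))) (iota m n).
Proof.
move=> Hp; elim: n m => [|n IH] m //=.
by rewrite -Hp IH.
Qed.

Definition ClOk (w : config d) (cl : seq (vertex d * dir d)) :=
  forall c, c \in cl -> c.2 \in w c.1.

Lemma decomp (w : config d) (p : nat -> vertex d) :
  (forall v s s', s \in w v -> s' \in w v -> s = s') ->
  injective p -> (forall n, ung_edge w (p n) (p n.+1)) ->
  (forall n, exists ds, size ds = n /\ uniq (walk (p 0%N) ds) /\ ClOk w (fcl (p 0%N) ds)) \/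
  (exists x, forall n, exists ds, size ds = n /\ uniq (walk x ds) /\ ClOk w (bcl x ds)).
Proof.
move=> Hs Hinj He.
have Hex : forall n, exists s, p n.+1 = nb (p n) s.
  move=> n; case: (He n) => -[s [_ Hs']].
    by exists s.
  by exists (opp s); rewrite Hs' nbK.
have [sd Hsd] := boolp.choice Hex.
have Hor : forall n, sd n \in w (p n) \/ opp (sd n) \in w (p n.+1).
  move=> n; case: (He n) => [[s [Hs1 Hs2]]|[t [Ht1 Ht2]]].
    by left; rewrite Hsd in Hs2; rewrite (nb_inj Hs2).
  right; have H1 : p n.+1 = nb (p n) (opp t) by rewrite Ht2 nbK.
  have H2 := H1; rewrite Hsd in H2; have H3 := nb_inj H2.
  by rewrite H3 oppK.
have Huq : forall m n, uniq (walk (p m) (map sd (iota m n))).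
  by move=> m n; rewrite (walk_iota _ _ Hsd) (map_inj_uniq Hinj) iota_uniq.
case: (pselect (forall n, sd n \in w (p n))) => [HF|].
  left => n; exists (map sd (iota 0 n)); rewrite size_map size_iota; split => //.
  split => // c; rewrite (fcl_iota _ _ Hsd) => /mapP [i _ ->] /=; exact: HF.
move/existsNP => [m Hm]; right; exists (p m) => n.
have HB : forall k, sd (m + k)%N \notin w (p (m + k)%N).
  elim => [|k IH]. by rewrite addn0; apply/negP.
  case: (Hor (m + k)%N) => [Hc|Ho]; first by rewrite Hc in IH.
  rewrite addnS; apply/negP => Hk; have Heq := Hs _ _ _ Hk Ho.
  have : p (m + k).+2 = p (m + k)%N.
    by rewrite Hsd Heq Hsd nbK.
  by move/Hinj => /eqP; rewrite -addn2 -[X in _ == X]addn0 eqn_add2l.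
exists (map sd (iota m n)); rewrite size_map size_iota; split => //.
split => // c; rewrite (bcl_iota _ _ Hsd) => /mapP [i]; rewrite mem_iota => /andP[Hi _] -> /=.
case: (Hor i) => [Hc|//]; have := HB (i - m)%N; by rewrite (subnKC Hi) Hc.
Qed.

Definition eU (w : config d) : rel (vertex d) := fun x y => `[< ung_edge w x y >].

Lemma eU_nb w x y : eU w x y -> exists s, y = nb x s.
Proof.
move/asboolP => [[s [_ ->]]|[t [_ ->]]]; first by exists s.
by exists (opp t); rewrite nbK.
Qed.

Definition good w c (V : seq (vertex d)) := forall n, exists l, (n <= size l)%N /\
  path (eU w) c l /\ uniq (c :: l) /\ ~~ has (fun v => v \in V) (c :: l).

Lemma good_step w c V : good w c V -> exists y, eU w c y /\ good w y (c :: V).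
Proof.
move=> G; apply/not_existsP => Hn.
have Hf : forall s : dir d, exists n, eU w c (nb c s) -> ~ exists l, (n <= size l)%N /\
   path (eU w) (nb c s) l /\ uniq (nb c s :: l) /\ ~~ has (fun v => v \in c :: V) (nb c s :: l).
  move=> s; case: (boolP (eU w c (nb c s))) => He; last by exists 0%N.
  have : ~ good w (nb c s) (c :: V) by move=> Hg; apply: (Hn (nb c s)).
  by move/existsNP => [n Hn']; exists n.
have [f Hf'] := boolp.choice Hf.
have [l [Hl [Hp [Hu Hh]]]] := G (\max_(s : 'I_d * bool) f s).+1.
case: l Hl Hp Hu Hh => [//|y l] /= Hl /andP[Hcy Hp] /andP[Hc Hu] Hh.
have [s Hs] := eU_nb Hcy; subst y.
apply: (Hf' s Hcy); exists l; split; [|split; [done|split; [done|]]].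
- by apply: leq_trans (leq_bigmax s) _; rewrite -ltnS.
- apply/seq.hasPn => v Hv; rewrite inE negb_or; apply/andP; split.
    by apply/eqP => E; subst v; rewrite Hv in Hc.
  move: Hh; rewrite negb_or => /andP[_ Hh].
  have Hh' : ~~ has (fun v => v \in V) (nb c s :: l) := Hh.
  move/seq.hasPn: Hh' => Hh'; exact: Hh'.
Qed.

Lemma konig w : (forall n, exists l, size l = n /\ path (eU w) (origin d) l /\
  uniq (origin d :: l)) -> reaches_infinity w.
Proof.
move=> H.
have G0 : good w (origin d) [::].
  move=> n; have [l [Hl [Hp Hu]]] := H n; exists l; rewrite Hl; split=>//; split=>//; split=>//.
  by apply/seq.hasPn => v; rewrite in_nil.
have Hst : forall cV : vertex d * seq (vertex d), exists y,
    good w cV.1 cV.2 -> eU w cV.1 y /\ good w y (cV.1 :: cV.2).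
  move=> [c V] /=; case: (pselect (good w c V)) => Hg; last by exists c.
  by have [y Hy] := good_step Hg; exists y.
have [nxt Hnxt] := boolp.choice Hst.
pose st n := iter n (fun cV => (nxt cV, cV.1 :: cV.2)) (origin d, [::]).
have Gst : forall n, good w (st n).1 (st n).2.
  by elim => //= n IH; exact: (Hnxt _ IH).2.
have Hmem : forall m n, (m < n)%N -> (st m).1 \in (st n).2.
  move=> m; elim => // n IH; rewrite ltnS leq_eqVlt => /orP[/eqP->|/IH].
    by rewrite /= inE eqxx.
  by rewrite /= inE => ->; rewrite orbT.
have Hnot : forall n, (st n).1 \notin (st n).2.
  by move=> n; have [l [_ [_ [_ Hh]]]] := Gst n 0%N; move: Hh; rewrite /= negb_or => /andP[].
exists (fun n => (st n).1); split => //; split.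
- move=> m n Heq; apply/eqP; case: (ltngtP m n) => // Hmn.
  + by have := Hnot n; rewrite -Heq (Hmem _ _ Hmn).
  + by have := Hnot m; rewrite Heq (Hmem _ _ Hmn).
- move=> n; apply/asboolP; exact: (Hnxt _ (Gst n)).1.
Qed.

Lemma konig_conv w : reaches_infinity w -> forall n, exists l, size l = n /\
  path (eU w) (origin d) l /\ uniq (origin d :: l).
Proof.
move=> [p [H0 [Hi He]]] n; exists (map p (iota 1 n)); rewrite size_map size_iota; split => //.
rewrite -H0; split; last by have := iota_uniq 0 n.+1; rewrite -(map_inj_uniq Hi).
have : forall m n, path (eU w) (p m) (map p (iota m.+1 n)).
  move=> m' n'; elim: n' m' => //= n' IH m'; rewrite IH andbT; exact/asboolP.
by apply.
Qed.

Lemma count_allpairs (T : eqType) (f : dir d -> T -> T) (s : seq (dir d)) t (P : pred T) :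
  count P [seq f x y | x <- s, y <- t] = (\sum_(x <- s) count (fun y => P (f x y)) t)%N.
Proof. by elim: s => [|x s IH]; rewrite ?big_nil ?big_cons //= count_cat IH count_map. Qed.

Lemma h_bound n : forall (x : vertex d) (s0 : dir d),
  (count (fun ds => (nb x s0 \notin walk x ds) && uniq (walk x ds)) (allseq n)
    <= (#|{: 'I_d * bool}|.-1) ^ n)%N.
Proof.
elim: n => [|n IH] x s0; first by rewrite /= expn0 addn0 leq_b1.
rewrite /= count_allpairs big_enum /=.
rewrite (bigD1 s0) //= (eq_count (a2 := pred0)); last first.
  move=> ds; rewrite walk_cons. by rewrite [in X in X && _]/walk !inE eqxx orbT.
rewrite count_pred0 add0n.
apply: (@leq_trans (\sum_(i : 'I_d * bool | i != s0) (#|{: 'I_d * bool}|.-1)^n)); last first.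
  rewrite sum_nat_const expnS leq_mul2r -(cardC1 (s0 : 'I_d * bool)).
  by apply/orP; right.
apply: leq_sum => s Hs.
apply: leq_trans (IH (nb x s) (opp s)); rewrite nbK.
by apply: sub_count => ds /and4P[_ H1 H2 H3]; rewrite /walk /= H1 H2 H3.
Qed.

Lemma g_bound n (x : vertex d) :
  (count (fun ds => uniq (walk x ds)) (allseq n.+1)
    <= #|{: 'I_d * bool}| * (#|{: 'I_d * bool}|.-1) ^ n)%N.
Proof.
rewrite /= count_allpairs big_enum /= -sum_nat_const.
apply: leq_sum => s _.
apply: leq_trans (h_bound n (nb x s) (opp s)); rewrite nbK.
by apply: sub_count => ds /and3P[H1 H2 H3]; rewrite /walk /= H1 H2 H3.
Qed.
End comb.


Section meas.
Variables (d : nat) (R : realType) (dT : measure_display) (T : measurableType dT).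
Variables (P : probability T R) (X : vertex d -> T -> {set dir d}).
Hypothesis mX : forall v A, measurable [set t | X v t = A].

Lemma mconst (Q : Prop) : measurable [set _ : T | Q].
Proof.
case: (pselect Q) => HQ.
  have -> : [set _ : T | Q] = setT by apply/seteqP; split.
  exact: measurableT.
have -> : [set _ : T | Q] = set0 by apply/seteqP; split.
exact: measurable0.
Qed.

Lemma mcount (U : countType) (F : U -> set T) :
  (forall i, measurable (F i)) -> measurable (\bigcup_i F i).
Proof. by move=> H; apply: countable_bigcupT_measurable => //; exact: countableP. Qed.

Lemma mQ v (Q : {set dir d} -> Prop) : measurable [set t | Q (X v t)].
Proof.
have -> : [set t | Q (X v t)] =
    \bigcup_(A : {set dir d}) ([set t | X v t = A] `&` [set _ | Q A]).
  apply/seteqP; split => t /=; first by move=> HQ; exists (X v t).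
  by move=> [A _ [/= -> HQ]].
apply: mcount => A; apply: measurableI; [exact: mX|exact: mconst].
Qed.

Definition w t : config d := fun v => X v t.

Lemma mEdge x y : measurable [set t | ung_edge (w t) x y].
Proof.
have -> : [set t | ung_edge (w t) x y] =
  [set t | (fun A => exists s, s \in A /\ y = nb x s) (X x t)] `|`
  [set t | (fun A => exists s, s \in A /\ x = nb y s) (X y t)] by apply/seteqP; split.
apply: measurableU.
  exact: (mQ x (fun A => exists s, s \in A /\ y = nb x s)).
exact: (mQ y (fun A => exists s, s \in A /\ x = nb y s)).
Qed.

Lemma mPath x l : measurable [set t | path (eU (w t)) x l].
Proof.
elim: l x => [|y l IH] x; first exact: (mconst true).
have -> : [set t | path (eU (w t)) x (y :: l)] =
    [set t | ung_edge (w t) x y] `&` [set t | path (eU (w t)) y l].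
  apply/seteqP; split => t /=; first by move/andP => [/asboolP H1 H2].
  by move=> [H1 H2]; apply/andP; split => //; apply/asboolP.
exact: measurableI (mEdge x y) (IH y).
Qed.

Definition En n := [set t | exists l, size l = n /\ path (eU (w t)) (origin d) l /\
  uniq (origin d :: l)].

Lemma mEn n : measurable (En n).
Proof.
have -> : En n = \bigcup_(l : seq (vertex d))
    ([set t | path (eU (w t)) (origin d) l] `&` [set _ | size l = n /\ uniq (origin d :: l)]).
  apply/seteqP; split => t /=; first by move=> [l [H1 [H2 H3]]]; exists l.
  by move=> [l _ [H2 [H1 H3]]]; exists l.
apply: mcount => l; exact: measurableI (mPath _ _) (mconst _).
Qed.

Lemma mE : measurable (inf_event X).
Proof.
have -> : inf_event X = \bigcap_n En n.
  apply/seteqP; split => t /=.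
    by move=> H n _; apply: konig_conv.
  by move=> H; apply: konig => n; exact: H.
by apply: bigcapT_measurable => n; exact: mEn.
Qed.


Hypothesis HP : forall (s : seq (vertex d)) (A : vertex d -> {set dir d}),
     uniq s -> (forall v, v \in s -> #|A v| = 1%N) ->
     P [set t | forall v, v \in s -> X v t = A v] =
       (((('C(2 * d, 1))%:R : R)^-1) ^+ size s)%:E.
Hypothesis d1 : (1 <= d)%N.

Let c : R := ((2 * d)%:R)^-1.
Let K := #|{: 'I_d * bool}|.

Lemma cardK : K = (2 * d)%N.
Proof. by rewrite /K card_prod card_ord card_bool mulnC. Qed.

Lemma HP' (s : seq (vertex d)) (A : vertex d -> {set dir d}) :
     uniq s -> (forall v, v \in s -> #|A v| = 1%N) ->
     P [set t | forall v, v \in s -> X v t = A v] = (c ^+ size s)%:E.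
Proof. by move=> H1 H2; rewrite HP // bin1. Qed.

Lemma mD (s : seq (vertex d)) (A : vertex d -> {set dir d}) :
  measurable [set t | forall v, v \in s -> X v t = A v].
Proof.
elim: s => [|a s IH].
  have -> : [set t | forall v, v \in [::] -> X v t = A v] = setT.
    by apply/seteqP; split => // t _ v; rewrite in_nil.
  exact: measurableT.
have -> : [set t | forall v, v \in a :: s -> X v t = A v] =
   [set t | X a t = A a] `&` [set t | forall v, v \in s -> X v t = A v].
  apply/seteqP; split => t /=.
    by move=> H; split; [apply: H; rewrite inE eqxx | move=> v Hv; apply: H; rewrite inE Hv orbT].
  by move=> [H1 H2] v; rewrite inE => /orP[/eqP->//|]; exact: H2.
exact: measurableI (mX _ _) IH.
Qed.

Lemma bigU_mem (I : eqType) (r : seq I) (Q : pred I) (F : I -> set T) t :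
  (\big[setU/set0]_(i <- r | Q i) F i) t <-> exists i, [/\ i \in r, Q i & F i t].
Proof.
elim: r => [|a r IH]; first by rewrite big_nil; split => // -[i []]; rewrite in_nil.
rewrite big_cons; split.
  case: ifP => Ha.
    case => [Ht|/IH [i [H1 H2 H3]]]; first by exists a; rewrite inE eqxx.
    by exists i; rewrite inE H1 orbT.
  by move/IH => [i [H1 H2 H3]]; exists i; rewrite inE H1 orbT.
move=> [i []]; rewrite inE => /orP[/eqP->|Hi] HQ HF.
  by rewrite HQ; left.
by case: ifP => _; [right|]; apply/IH; exists i.
Qed.

Definition fs1 (s : dir d) : {set dir d} := [set s]%SET.
Definition Sg v := [set t | #|X v t| = 1%N].

Lemma PSg v : P (Sg v) = 1%E.
Proof.
have -> : Sg v = \big[setU/set0]_(i < K) [set t | X v t = (fs1 (enum_val i))].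
  apply/seteqP; split => t /=.
    move/eqP/cards1P => [s Hs]; apply/bigU_mem.
    exists (enum_rank (s : 'I_d * bool)); split => //; first by rewrite mem_index_enum.
    by rewrite /= enum_rankK.
  move/bigU_mem => -[i [_ _ /= Hx]]; rewrite /Sg /= Hx; exact: cards1.
rewrite measure_bigsetU_ord; last first.
- move=> i j _ _ [t [/= Hi Hj]]; apply: enum_val_inj.
  rewrite Hi in Hj; move/setP: Hj => H.
  by have := H (enum_val i); rewrite /fs1 !inE eqxx => /esym/eqP.
- by move=> i; exact: mX.
rewrite (eq_bigr (fun _ => (c ^+ 1)%:E)); last first.
  move=> i _.
  have -> : [set t | X v t = fs1 (enum_val i)] =
     [set t | forall u, u \in [:: v] -> X u t = (fun _ => fs1 (enum_val i)) u].
    apply/seteqP; split => t /=; first by move=> H u; rewrite inE => /eqP->.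
    by move=> H; apply: H; rewrite inE.
  apply: HP' => //; by move=> u _; rewrite cards1.
rewrite sumEFin sumr_const card_ord /= expr1 cardK /c.
by rewrite -[X in X%:E]mulr_natr mulVf // pnatr_eq0 muln_eq0 /= -lt0n d1.
Qed.


Lemma negl_count (U : countType) (F : U -> set T) :
  (forall i, P.-negligible (F i)) -> P.-negligible (\bigcup_i F i).
Proof.
move=> H.
apply: (negligibleS (A := \bigcup_k (if @unpickle U k is Some i then F i else set0))).
  by move=> t [i _ Fi]; exists (pickle i) => //; rewrite pickleK.
apply: negligible_bigcup => k; case: (unpickle k) => [i|]; [exact: H|exact: negligible_set0].
Qed.

Definition Bad := \bigcup_(v : vertex d) ~` Sg v.

Lemma mSg v : measurable (Sg v).
Proof. exact: (mQ v (fun A => #|A| = 1%N)). Qed.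

Lemma mBad : measurable Bad.
Proof. by apply: mcount => v; apply: measurableC; exact: mSg. Qed.

Lemma PBad : P Bad = 0%E.
Proof.
apply/negligibleP; first exact: mBad.
apply: negl_count => v; apply/negligibleP; first by apply: measurableC; exact: mSg.
have H := probability_setC P (mSg v); rewrite PSg subee // in H; exact: H.
Qed.

Definition ClSet cl := [set t | ClOk (w t) cl].

Lemma mCl cl : measurable (ClSet cl).
Proof.
elim: cl => [|a cl IH].
  have -> : ClSet [::] = setT by apply/seteqP; split => // t _ x; rewrite in_nil.
  exact: measurableT.
have -> : ClSet (a :: cl) = [set t | a.2 \in X a.1 t] `&` ClSet cl.
  apply/seteqP; split => t /=.
    by move=> H; split; [apply: H; rewrite inE eqxx | move=> x Hx; apply: H; rewrite inE Hx orbT].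
  by move=> [H1 H2] x; rewrite inE => /orP[/eqP->//|]; exact: H2.
apply: measurableI (mQ _ (fun A => a.2 \in A)) IH.
Qed.

Lemma uniq_fst (cl : seq (vertex d * dir d)) v s s' : uniq (map fst cl) ->
  (v, s) \in cl -> (v, s') \in cl -> s' = s.
Proof.
elim: cl => // [[a b] cl IH] /= /andP[Ha Hu]; rewrite !inE.
case/orP => [/eqP[E1 E2]|H1]; case/orP => [/eqP[E3 E4]|H2].
- by rewrite E2 E4.
- by have := map_f fst H2; rewrite /= E1 (negbTE Ha).
- by have := map_f fst H1; rewrite /= E3 (negbTE Ha).
- exact: IH.
Qed.

Lemma Cl_bound cl : uniq (map fst cl) -> (P (ClSet cl) <= (c ^+ size cl)%:E)%E.
Proof.
move=> Hu.
pose A v := [set s | (v, s) \in cl]%SET.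
have HA : forall v s, (v, s) \in cl -> A v = fs1 s.
  move=> v s Hin; apply/setP => s'; rewrite /A /fs1 !inE; apply/idP/eqP => [H|->//].
  exact: uniq_fst Hu Hin H.
have HA1 : forall v, v \in map fst cl -> #|A v| = 1%N.
  by move=> v /mapP [[v' s] Hin /= ->]; rewrite (HA _ _ Hin) cards1.
have HD := HP' Hu HA1; rewrite size_map in HD.
set D := [set t | forall v, v \in map fst cl -> X v t = A v] in HD.
have mD' : measurable D by exact: mD.
apply: (@le_trans _ _ (P (Bad `|` D))).
  apply: le_measure; rewrite ?inE; [exact: mCl|exact: measurableU mBad mD'|].
  move=> t Ht; case: (pselect (Bad t)) => [Hb|Hb]; [by left|right].
  move=> v /mapP [[v' s] Hin /= ->].
  have : Sg v' t by apply: contrapT => Hn; apply: Hb; exists v'.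
  rewrite /Sg /= => /eqP/cards1P [x0 Hx0].
  have := Ht _ Hin; rewrite /w /= Hx0 inE => /eqP Es.
  by rewrite (HA _ _ Hin) Es.
have H : (P (Bad `|` D) <= P Bad + P D)%E := measureU2 P mBad mD'.
by apply: le_trans H _; rewrite PBad HD add0e.
Qed.


Lemma union_bound (I : Type) (r : seq I) (Q : pred I) (F : I -> set T) :
  (forall i, measurable (F i)) ->
  (P (\big[setU/set0]_(i <- r | Q i) F i) <= \sum_(i <- r | Q i) P (F i))%E.
Proof.
move=> mF; elim: r => [|a r IH]; first by rewrite !big_nil measure0.
rewrite !big_cons; case: ifP => _ //.
have mU : measurable (\big[setU/set0]_(i <- r | Q i) F i) by exact: bigsetU_measurable.
have H : (P (F a `|` \big[setU/set0]_(i <- r | Q i) F i) <=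
   P (F a) + P (\big[setU/set0]_(i <- r | Q i) F i))%E := measureU2 P (mF a) mU.
by apply: le_trans H _; exact: leeD2l.
Qed.

Lemma sum_const_count (I : Type) (r : seq I) (Q : pred I) (a : R) :
  \sum_(i <- r | Q i) a = a *+ count Q r.
Proof.
elim: r => [|x r IH]; first by rewrite big_nil.
by rewrite big_cons /= IH; case: (Q x); rewrite ?mulrS ?add0n.
Qed.

Let r0 : R := (K.-1)%:R / K%:R.

Lemma Kpos : (0 < K%:R :> R).
Proof. by rewrite ltr0n cardK muln_gt0. Qed.

Lemma cK : c = (K%:R)^-1.
Proof. by rewrite /c cardK. Qed.

Lemma walk_bound (cl : vertex d -> seq (dir d) -> seq (vertex d * dir d)) x n :
  (forall ds, size (cl x ds) = size ds) ->
  (forall ds, uniq (walk x ds) -> uniq (map fst (cl x ds))) ->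
  (P (\big[setU/set0]_(ds <- allseq d n.+1 | uniq (walk x ds)) ClSet (cl x ds))
     <= (r0 ^+ n)%:E)%E.
Proof.
move=> Hs Hu.
apply: le_trans (union_bound _ _ (fun ds => mCl _)) _.
rewrite big_seq_cond.
apply: (@le_trans _ _ (\sum_(ds <- allseq d n.+1 | (ds \in allseq d n.+1) && uniq (walk x ds))
   (c ^+ n.+1)%:E)).
  apply: lee_sum => ds /andP[Hm Hw]; rewrite -(allseq_size Hm) -(Hs ds).
  by apply: Cl_bound; exact: Hu.
rewrite -big_seq_cond sumEFin lee_fin sum_const_count.
apply: (@le_trans _ _ (c ^+ n.+1 *+ (K * K.-1 ^ n))).
  rewrite ler_pMn2l; first exact: g_bound.
  by rewrite exprn_gt0 // cK invr_gt0 Kpos.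
rewrite -mulr_natr natrM natrX cK exprS /r0 exprMn.
rewrite mulrACA mulVf ?mul1r; last by rewrite gt_eqF // Kpos.
by rewrite mulrC exprVn.
Qed.


Lemma zero_lim (a : \bar R) : (0 <= a)%E -> (forall n, (a <= (r0 ^+ n)%:E)%E) -> a = 0%E.
Proof.
case: a => [a| |] Ha H; last by [].
- have Hr : `|r0| < 1.
    have r0p : 0 <= r0 by rewrite /r0 divr_ge0 // ler0n.
    rewrite ger0_norm // /r0 ltr_pdivrMr ?Kpos // mul1r ltr_nat.
    by rewrite cardK prednK // muln_gt0.
  have Hc := cvg_expr Hr.
  have : a <= lim ((fun n => (r0 ^+ n : R)) @ \oo).
    apply: limr_ge; first exact: cvgP Hc.
    by apply: nearW => n; have := H n; rewrite lee_fin.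
  rewrite (cvg_lim _ Hc) // => Ha'; congr (_%:E); apply/eqP; rewrite eq_le Ha'.
  by rewrite -lee_fin.
- by have := H 0%N.
Qed.

Definition UF x n := \big[setU/set0]_(ds <- allseq d n | uniq (walk x ds)) ClSet (fcl x ds).
Definition UB x n := \big[setU/set0]_(ds <- allseq d n | uniq (walk x ds)) ClSet (bcl x ds).

Lemma null_cap (F : nat -> set T) : (forall n, measurable (F n)) ->
  (forall n, (P (F n.+1) <= (r0 ^+ n)%:E)%E) -> P.-negligible (\bigcap_n F n).
Proof.
move=> mF HF; have mC : measurable (\bigcap_n F n) by exact: bigcapT_measurable.
apply/negligibleP => //; apply: zero_lim; first exact: measure_ge0.
move=> n; apply: le_trans (HF n).
apply: le_measure; rewrite ?inE //; last by move=> t Ht; exact: Ht.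
Qed.

Lemma mU (cl : vertex d -> seq (dir d) -> seq (vertex d * dir d)) x n :
  measurable (\big[setU/set0]_(ds <- allseq d n | uniq (walk x ds)) ClSet (cl x ds)).
Proof. by apply: bigsetU_measurable => ds _; exact: mCl. Qed.

Lemma NF_negl x : P.-negligible (\bigcap_n UF x n).
Proof.
apply: null_cap => n; rewrite /UF; first exact: (mU (@fcl d)).
by apply: (walk_bound (cl := @fcl d)) => ds; [exact: size_fcl|exact: uniq_fcl].
Qed.

Lemma NB_negl x : P.-negligible (\bigcap_n UB x n).
Proof.
apply: null_cap => n; rewrite /UB; first exact: (mU (@bcl d)).
by apply: (walk_bound (cl := @bcl d)) => ds; [exact: size_bcl|exact: uniq_bcl].
Qed.

Lemma main_null : P (inf_event X) = 0%E.
Proof.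
apply/negligibleP; first exact: mE.
apply: (negligibleS (A := Bad `|` \bigcap_n UF (origin d) n `|` \bigcup_x \bigcap_n UB x n)).
  move=> t Ht; case: (pselect (Bad t)) => Hb; first by left; left.
  have Hs : forall v s s', s \in w t v -> s' \in w t v -> s = s'.
    move=> v s s'.
    have : Sg v t by apply: contrapT => Hn; apply: Hb; exists v.
    rewrite /Sg /w /= => /eqP/cards1P [x0 ->]; rewrite !inE => /eqP-> /eqP->.
    done.
  move: Ht => [p [H0 [Hi He]]].
  case: (decomp Hs Hi He) => [HF|[x HB]].
    left; right => n _; have [ds [Hsz [Hu Hc]]] := HF n.
    apply/bigU_mem; exists ds; rewrite -H0; split => //.
    by rewrite -Hsz; exact: allseq_mem.
  right; exists x => // n _; have [ds [Hsz [Hu Hc]]] := HB n.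
  apply/bigU_mem; exists ds; split => //.
  by rewrite -Hsz; exact: allseq_mem.
apply: negligibleU; first apply: negligibleU.
- by apply/negligibleP; [exact: mBad|exact: PBad].
- exact: NF_negl.
- by apply: negl_count => x; exact: NB_negl.
Qed.

End meas.

Theorem proposition2p8 (d : nat) (R : realType) (dT : measure_display)
    (T : measurableType dT) (P : probability T R)
    (X : vertex d -> T -> {set dir d}) :
  (1 <= d)%N -> kng_law 1 P X -> P (inf_event X) = 0%E.
Proof. by move=> d1 [mX HP]; exact: main_null. Qed.
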